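(* Let $G=(V,E)$ be an undirected, unweighted, connected graph on $N$ vertices and let $u\in V$. Then $$\min\{\mathsf{fp}_{r=1}^{\mathrm{dB}}(G,\{u\}),\ \mathsf{fp}_{r=1}^{\mathrm{Bd}}(G,\{u\})\}\le 1/N.$$
   Context: Mixed $\delta$-updating on a connected undirected unweighted graph: each vertex holds a mutant (fitness $r$) or wild-type (fitness $1$); $f_S(u)$ is the fitness at $u$ when $S$ is the mutant set. At each step, with probability $\delta$ a death-Birth step: choose $v$ uniformly to die, choose a neighbor $u$ of $v$ with probability proportional to $f_S(u)$, $u$ copies its type onto $v$; with probability $1-\delta$ a Birth-death step: choose $u$ with probability proportional to $f_S(u)$ among all vertices, choose a uniformly random neighbor $v$ of $u$, $u$ copies its type onto $v$. $\mathsf{fp}_r^\delta(G,S_0)$ is the probability all vertices eventually become mutant from initial mutant set $S_0$; $\delta=\mathrm{dB}$ means $\delta=1$ and $\delta=\mathrm{Bd}$ means $\delta=0$. *)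

(* Defs.v *)
From HB Require Import structures.
From mathcomp Require Import all_boot all_order all_algebra.
From mathcomp Require Import all_classical all_reals all_analysis.
Set Implicit Arguments. Unset Strict Implicit. Unset Printing Implicit Defensive.
Import Order.TTheory GRing.Theory Num.Theory numFieldNormedType.Exports.
Local Open Scope ring_scope.

Section MixedUpdating.
Variables (R : realType) (T : finType) (e : rel T).
(* e : adjacency relation of the graph (symmetric, irreflexive) *)
Variables (r delta : R).

Definition fitness (S : {set T}) (w : T) : R := if w \in S then r else 1.

(* u copies its type onto v *)
Definition reproduce (S : {set T}) (u v : T) : {set T} :=
  if u \in S then v |: S else S :\ v.

Definition deg (u : T) : R := #|[set w | e u w]|%:R.

Definition trans (S S' : {set T}) : R :=
  delta * (\sum_(v : T) \sum_(u : T | e v u)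
     (#|T|%:R)^-1 * (fitness S u / (\sum_(w : T | e v w) fitness S w))
       * (reproduce S u v == S')%:R)
  + (1 - delta) * (\sum_(u : T) \sum_(v : T | e u v)
     (fitness S u / (\sum_(w : T) fitness S w)) * (deg u)^-1
       * (reproduce S u v == S')%:R).

Fixpoint hitprob (n : nat) (S : {set T}) : R :=
  if S == [set: T] then 1 else
  match n with
  | 0 => 0
  | n'.+1 => \sum_(S' : {set T}) trans S S' * hitprob n' S'
  end.

Definition fp (S0 : {set T}) : R := limn (fun n => hitprob n S0).

End MixedUpdating.

(* Main.v *)
Require Import Defs.
From HB Require Import structures.
From mathcomp Require Import all_boot all_order all_algebra.
From mathcomp Require Import all_classical all_reals all_analysis.
From mathcomp Require Import ring lra.
Import Order.TTheory GRing.Theory Num.Theory numFieldNormedType.Exports.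
Local Open Scope ring_scope.

Lemma limn_le_bound (R : realType) (u : nat -> R) M :
  {homo u : n m / (n <= m)%N >-> n <= m} -> (forall n, u n <= M) -> limn u <= M.
Proof.
move=> hu hM; apply: limr_le.
  apply: nondecreasing_is_cvgn => //; exists M => _ [n _ <-]; exact: hM.
by apply: nearW.
Qed.

Lemma sum_ind (R : realType) (I : finType) (g : I -> R) X :
  \sum_(S' : I) (X == S')%:R * g S' = g X.
Proof.
rewrite (bigD1 X) //= eqxx mul1r big1 ?addr0 // => S' hS.
by rewrite eq_sym (negbTE hS) mul0r.
Qed.

Lemma swap_sum (R : realType) (I J : finType) (P : pred J) (a : J -> R) (b : J -> I) (F : I -> R) :
  \sum_(S' : I) (\sum_(j | P j) a j * (b j == S')%:R) * F S' = \sum_(j | P j) a j * F (b j).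
Proof.
under eq_bigr => S' _ do rewrite mulr_suml.
rewrite exchange_big; apply: eq_bigr => j _.
under eq_bigr => S' _ do rewrite -mulrA.
by rewrite -mulr_sumr sum_ind.
Qed.

Lemma swap_sum2 (R : realType) (I J : finType) (P : J -> pred J) (a : J -> J -> R) (b : J -> J -> I) (F : I -> R) :
  \sum_(S' : I) (\sum_(v : J) \sum_(j | P v j) a v j * (b v j == S')%:R) * F S' =
  \sum_(v : J) \sum_(j | P v j) a v j * F (b v j).
Proof.
under eq_bigr => S' _ do rewrite mulr_suml.
rewrite exchange_big; apply: eq_bigr => v _; exact: swap_sum.
Qed.

Section Gen.
Variables (R : realType) (T : finType) (e : rel T) (delta : R).

Lemma trans_sum (r : R) S (F : {set T} -> R) :
  \sum_S' trans e r delta S S' * F S' =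
  delta * (\sum_(v : T) \sum_(u : T | e v u)
     (#|T|%:R)^-1 * (fitness r S u / (\sum_(w : T | e v w) fitness r S w)) * F (reproduce S u v))
  + (1 - delta) * (\sum_(u : T) \sum_(v : T | e u v)
     (fitness r S u / (\sum_(w : T) fitness r S w)) * (deg R e u)^-1 * F (reproduce S u v)).
Proof.
rewrite /trans; under eq_bigr => S' _ do rewrite mulrDl -!mulrA.
rewrite big_split /= -!mulr_sumr; congr (_ * _ + _ * _); exact: swap_sum2.
Qed.

Hypothesis trans_ge0 : forall S S', 0 <= trans e 1 delta S S'.

Lemma hit_ge0 n S : 0 <= hitprob e 1 delta n S.
Proof.
elim: n S => [|n IH] S /=; case: ifP => // _.
by apply: sumr_ge0 => S' _; apply: mulr_ge0.
Qed.

Lemma hit_mono n S : hitprob e 1 delta n S <= hitprob e 1 delta n.+1 S.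
Proof.
elim: n S => [|n IH] S.
  rewrite /=; case: ifP => // _.
  by apply: sumr_ge0 => S' _; apply: mulr_ge0 => //; case: ifP.
rewrite [hitprob _ _ _ n.+1 _]/= [hitprob _ _ _ n.+2 _]/=; case: ifP => // _.
by apply: ler_sum => S' _; apply: ler_wpM2l.
Qed.

Variable f : {set T} -> R.
Hypothesis f_ge0 : forall S, 0 <= f S.
Hypothesis f_full : f [set: T] = 1.
Hypothesis f_mart : forall S, S != [set: T] ->
   \sum_S' trans e 1 delta S S' * f S' = f S.

Lemma hit_le n S : hitprob e 1 delta n S <= f S.
Proof.
elim: n S => [|n IH] S /=; case: ifP => [/eqP -> |hS]; rewrite ?f_full //.
rewrite -f_mart ?hS //; apply: ler_sum => S' _; exact: ler_wpM2l.
Qed.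

Lemma fp_le S : fp e 1 delta S <= f S.
Proof.
apply: limn_le_bound => [n m nm|n]; last exact: hit_le.
elim: m nm => [|m IH]; first by rewrite leqn0 => /eqP ->.
rewrite leq_eqVlt => /orP [/eqP -> //|]; rewrite ltnS => /IH h.
exact: le_trans h (hit_mono _ _).
Qed.

End Gen.

Lemma sum_ind2 (R : realType) (I : finType) (g : I -> R) X :
  \sum_(w : I) g w * (w == X)%:R = g X.
Proof.
rewrite (bigD1 X) //= eqxx mulr1 big1 ?addr0 // => w hw.
by rewrite (negbTE hw) mulr0.
Qed.

Lemma sum_mk (R : realType) (T : finType) (P : pred T) (G : T -> R) :
  \sum_(w | P w) G w = \sum_w (P w)%:R * G w.
Proof.
rewrite big_mkcond; apply: eq_bigr => w _; by case: (P w); rewrite ?mul1r ?mul0r.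
Qed.

Lemma sum_gt0 (R : realType) (T : finType) (G : T -> R) (x : T) :
  (forall w, 0 < G w) -> 0 < \sum_w G w.
Proof.
move=> hG; rewrite (bigD1 x) //=; apply: ltr_wpDr; last exact: hG.
by apply: sumr_ge0 => w _; apply: ltW.
Qed.

Lemma sym_sum0 (R : realType) (T : finType) (g : T -> T -> R) (b : T -> R) :
  (forall u v, g u v = g v u) -> \sum_u \sum_v g u v * (b u - b v) = 0.
Proof.
move=> gs.
have E : \sum_u \sum_v g u v * b v = \sum_u \sum_v g u v * b u.
  rewrite exchange_big; apply: eq_bigr => u _; apply: eq_bigr => v _; by rewrite gs.
rewrite (eq_bigr (fun u => \sum_v g u v * b u - \sum_v g u v * b v)); last first.
  move=> u _; rewrite -sumrB; apply: eq_bigr => v _; by rewrite mulrBr.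
by rewrite sumrB E subrr.
Qed.

Lemma amgm2 (R : realType) (x y : R) : 0 < x -> 0 < y -> 2 <= x / y + y / x.
Proof.
move=> hx hy.
have E : x / y + y / x - 2 = (x - y) ^+ 2 / (x * y).
  by field; apply/andP; split; rewrite gt_eqF.
rewrite -subr_ge0 E; apply: divr_ge0; [exact: sqr_ge0 | exact: ltW (mulr_gt0 hx hy)].
Qed.

Lemma cauchy (R : realType) (T : finType) (d : T -> R) :
  (forall w, 0 < d w) -> (#|T|%:R) ^+ 2 <= (\sum_w d w) * (\sum_w (d w)^-1).
Proof.
move=> hd.
have DH : (\sum_w d w) * (\sum_w (d w)^-1) = \sum_i \sum_j d i / d j.
  rewrite mulr_suml; apply: eq_bigr => i _; by rewrite mulr_sumr.
have DH' : (\sum_w d w) * (\sum_w (d w)^-1) = \sum_i \sum_j d j / d i.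
  by rewrite DH exchange_big.
have : \sum_(i : T) \sum_(j : T) (2 : R) <=
   \sum_i \sum_j d i / d j + \sum_i \sum_j d j / d i.
  rewrite -big_split; apply: ler_sum => i _; rewrite -big_split; apply: ler_sum => j _.
  exact: amgm2.
rewrite -DH -DH' !sumr_const; set N := (#|T|%:R : R); set P := _ * _.
have e1 : forall x : R, x *+ #|T| = x * N by move=> x; rewrite /N mulr_natr.
rewrite !e1 => h; rewrite expr2; nra.
Qed.

Section Main.
Variables (R : realType) (T : finType) (e : rel T).
Hypothesis e_sym : symmetric e.
Hypothesis e_conn : forall x y : T, connect e x y.
Hypothesis hcard : (1 < #|T|)%N.

Local Notation d v := (deg R e v).

Lemma deg_sum v : \sum_w (e v w)%:R = d v.
Proof.
rewrite /deg -sumr_const [RHS]big_mkcond /=; apply: eq_bigr => w _; rewrite inE.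
by case: (e v w).
Qed.

Lemma sum1d v : \sum_(w | e v w) (1 : R) = d v.
Proof. by rewrite sum_mk -deg_sum; apply: eq_bigr => w _; rewrite mulr1. Qed.

Lemma deg_gt0 v : 0 < d v.
Proof.
have [w hw] : exists w, w != v.
  case/card_gt1P: hcard => x [y [_ _ xy]].
  case: (eqVneq x v) => [xv|]; last by exists x.
  by exists y; rewrite -xv eq_sym.
case/connectP: (e_conn v w) => [[|z p]] /=.
  by move=> _ wv; rewrite wv eqxx in hw.
case/andP => evz _ _; rewrite /deg ltr0n; apply/card_gt0P; exists z; by rewrite inE.
Qed.

Lemma fit1 (S : {set T}) : fitness (1 : R) S = fun=> 1.
Proof. by apply: boolp.funext => w; rewrite /fitness; case: ifP. Qed.

Lemma trans_ge0' delta S S' : 0 <= delta <= 1 -> 0 <= trans e (1 : R) delta S S'.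
Proof.
case/andP => d0 d1; rewrite /trans fit1; apply: addr_ge0; apply: mulr_ge0.
- exact: d0.
- apply: sumr_ge0 => v _; apply: sumr_ge0 => u _; apply: mulr_ge0 => //.
  apply: mulr_ge0; first by rewrite invr_ge0.
  by rewrite mul1r invr_ge0; apply: sumr_ge0.
- by rewrite subr_ge0.
- apply: sumr_ge0 => v _; apply: sumr_ge0 => u _; apply: mulr_ge0 => //.
  apply: mulr_ge0; last by rewrite invr_ge0 /deg.
  by rewrite mul1r invr_ge0; apply: sumr_ge0.
Qed.

Definition b (S : {set T}) v : R := (v \in S)%:R.

Lemma rep_b S u v w : b (reproduce S u v) w = b S w + (w == v)%:R * (b S u - b S v).
Proof.
rewrite /b /reproduce; case: (eqVneq w v) => [->|wv]; case: ifP => uS;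
  rewrite ?inE ?eqxx ?(negbTE wv) ?uS /=; case: (v \in S) => /=;
  rewrite ?mul0r ?mul1r ?addr0 ?subrr //; try ring.
Qed.

Lemma f_rep (p : T -> R) S u v :
  \sum_w p w * b (reproduce S u v) w = \sum_w p w * b S w + p v * (b S u - b S v).
Proof.
under eq_bigr => w _ do rewrite rep_b mulrDr mulrA.
by rewrite big_split /= -big_distrl /= sum_ind2.
Qed.

Variable x0 : T.
Local Notation D := (\sum_w d w).
Local Notation H := (\sum_w (d w)^-1).
Local Notation N := (#|T|%:R : R).

Lemma D_gt0 : 0 < D. Proof. exact: (@sum_gt0 R T _ x0 deg_gt0). Qed.
Lemma H_gt0 : 0 < H. Proof. by apply: (@sum_gt0 R T _ x0) => w; rewrite invr_gt0 deg_gt0. Qed.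
Lemma N_gt0 : 0 < N. Proof. rewrite ltr0n; apply/card_gt0P; by exists x0. Qed.

Definition fd S := \sum_v (d v / D) * b S v.
Definition fb S := \sum_v ((d v)^-1 / H) * b S v.

Lemma dsum S : \sum_v \sum_u (e v u)%:R * b S u = \sum_u d u * b S u.
Proof.
rewrite exchange_big; apply: eq_bigr => u _; rewrite -big_distrl -deg_sum /=.
by congr (_ * _); apply: eq_bigr => v _; rewrite e_sym.
Qed.

Lemma mart_dB S : \sum_S' trans e 1 1 S S' * fd S' = fd S.
Proof.
rewrite trans_sum subrr mul0r addr0 mul1r fit1.
under eq_bigr => v _ do rewrite sum1d sum_mk.
under eq_bigr => v _ do under eq_bigr => u _ do rewrite /fd f_rep.
set F := \sum_v (d v / D) * b S v.
have hD := D_gt0; have hN := N_gt0.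
have step : forall v, \sum_u (e v u)%:R * (N^-1 * (1 / d v) * (F + d v / D * (b S u - b S v)))
   = N^-1 * (F - d v / D * b S v) + N^-1 / D * \sum_u (e v u)%:R * b S u.
  move=> v; have dv := deg_gt0 v.
  rewrite (eq_bigr (fun u => (e v u)%:R * (N^-1 * (F - d v / D * b S v) / d v)
                     + N^-1 / D * ((e v u)%:R * b S u))); last first.
    move=> u _; field. rewrite !gt_eqF //.
  rewrite big_split /= -big_distrl deg_sum -mulr_sumr.
  by congr (_ + _); rewrite /= mulrC divfK ?gt_eqF.
have sc : \sum_(v : T) F = F * N by rewrite sumr_const mulr_natr.
rewrite (eq_bigr _ (fun v _ => step v)) big_split /= -!mulr_sumr sumrB sc.
rewrite -/F dsum.
have -> : \sum_u d u * b S u = D * F.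
  rewrite /F mulr_sumr; apply: eq_bigr => v _.
  by rewrite mulrA mulrCA mulfV ?gt_eqF // mulr1.
rewrite /fd -/F.
field. rewrite !gt_eqF //.
Qed.

Lemma mart_Bd S : \sum_S' trans e 1 0 S S' * fb S' = fb S.
Proof.
rewrite trans_sum mul0r add0r subr0 mul1r fit1.
have sc1 : \sum_(w : T) (1 : R) = N by rewrite sumr_const.
rewrite sc1.
under eq_bigr => u _ do rewrite sum_mk.
under eq_bigr => u _ do under eq_bigr => v _ do rewrite /fb f_rep.
set F := \sum_v ((d v)^-1 / H) * b S v.
have hH := H_gt0; have hN := N_gt0.
pose g u v := (e u v)%:R / (H * (d u * d v)).
rewrite (eq_bigr (fun u => \sum_v ((N^-1 * F / d u) * (e u v)%:R
                + N^-1 * (g u v * (b S u - b S v))))); last first.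
  move=> u _; apply: eq_bigr => v _; rewrite /g.
  have := deg_gt0 u; have := deg_gt0 v => hv hu.
  field; rewrite !gt_eqF //.
under eq_bigr => u _ do rewrite big_split /= -mulr_sumr -mulr_sumr deg_sum divfK ?gt_eqF ?deg_gt0 //.
rewrite big_split /= -!mulr_sumr sym_sum0; last first.
  by move=> u v; rewrite /g e_sym [d u * _]mulrC.
rewrite sumr_const mulr0 addr0 mulrnAr /fb -/F.
change ((N^-1 * F) *+ #|T| = F).
by rewrite -mulr_natr mulrAC mulVf ?mul1r // gt_eqF.
Qed.

Lemma fd_ge0 S : 0 <= fd S.
Proof.
apply: sumr_ge0 => v _; apply: mulr_ge0; last by rewrite /b.
by apply: divr_ge0; apply: ltW; [exact: deg_gt0 | exact: D_gt0].
Qed.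

Lemma fb_ge0 S : 0 <= fb S.
Proof.
apply: sumr_ge0 => v _; apply: mulr_ge0; last by rewrite /b.
by apply: divr_ge0; apply: ltW; [rewrite invr_gt0; exact: deg_gt0 | exact: H_gt0].
Qed.

Lemma fd_full : fd [set: T] = 1.
Proof.
rewrite /fd; under eq_bigr => v _ do rewrite /b inE mulr1.
by rewrite -mulr_suml divff // gt_eqF // D_gt0.
Qed.

Lemma fb_full : fb [set: T] = 1.
Proof.
rewrite /fb; under eq_bigr => v _ do rewrite /b inE mulr1.
by rewrite -mulr_suml divff // gt_eqF // H_gt0.
Qed.

Lemma fd_1 : fd [set x0] = d x0 / D.
Proof.
by rewrite /fd; under eq_bigr => v _ do rewrite /b inE; rewrite sum_ind2.
Qed.

Lemma fb_1 : fb [set x0] = (d x0)^-1 / H.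
Proof.
by rewrite /fb; under eq_bigr => v _ do rewrite /b inE; rewrite sum_ind2.
Qed.

Lemma main_ineq : Num.min (fp e (1 : R) 1 [set x0]) (fp e (1 : R) 0 [set x0]) <= 1 / N.
Proof.
have h1 : fp e (1 : R) 1 [set x0] <= d x0 / D.
  rewrite -fd_1; apply: (@fp_le R T e 1 _ fd) => //.
  - by move=> S S'; apply: trans_ge0'; rewrite ler01 lexx.
  - exact: fd_ge0.
  - exact: fd_full.
  - by move=> S _; exact: mart_dB.
have h2 : fp e (1 : R) 0 [set x0] <= (d x0)^-1 / H.
  rewrite -fb_1; apply: (@fp_le R T e 0 _ fb) => //.
  - by move=> S S'; apply: trans_ge0'; rewrite lexx ler01.
  - exact: fb_ge0.
  - exact: fb_full.
  - by move=> S _; exact: mart_Bd.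
have cs := @cauchy R T (fun w => d w) deg_gt0.
have hD := D_gt0; have hH := H_gt0; have hN := N_gt0; have hx := deg_gt0 x0.
rewrite ge_min; apply/orP; case: (lerP (d x0 / D) (1 / N)) => h.
  by left; exact: le_trans h1 h.
right; apply: le_trans h2 _.
move: h; rewrite ltr_pdivlMr // mulrC mulrA mulr1 ltr_pdivrMr // => h.
rewrite -invfM mul1r lef_pV2 ?posrE ?mulr_gt0 //.
rewrite expr2 in cs; nra.
Qed.

End Main.


(* dB : delta = 1 ; Bd : delta = 0 ; neutral fitness r = 1 *)
Theorem mainTheorem8 (R : realType) (T : finType) (e : rel T)
  (e_sym : symmetric e) (e_irr : irreflexive e)
  (e_conn : forall x y : T, connect e x y) (u : T) :
  Num.min (fp e (1 : R) 1 [set u]) (fp e (1 : R) 0 [set u])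
    <= 1 / (#|T|%:R : R).
Proof.
case: (ltnP 1 #|T|) => hc.
  exact: (@main_ineq R T e e_sym e_conn hc u).
have hS : [set u] == [set: T].
  by rewrite eqEcard; apply/andP; split; [exact: finset.subsetT | rewrite cardsT cards1].
have hT : #|T| = 1%N.
  by apply/eqP; rewrite eqn_leq hc; apply/card_gt0P; exists u.
have hp1 : forall n, hitprob e (1 : R) 1 n [set u] = 1.
  by case=> [|n] /=; rewrite hS.
rewrite ge_min; apply/orP; left.
have -> : 1 / ((#|T|%:R) : R) = 1 by rewrite hT mul1r invr1.
apply: limn_le_bound => [n m _|n]; by rewrite !hp1.
Qed.
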